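(* Let $P$ be a path producible by a tile assembly system $\mathcal T=(T,\sigma,1)$, let $(i,j,k)$ be a shield for $P$ with cut $c$ and workspace $\mathcal C$, and let $l^k$ be the vertical ray going north from the position of $\mathrm{glue}_P(k)$. Then $$(l^k+\overrightarrow{P_jP_i})\cap\mathcal C=(l^k+\overrightarrow{P_jP_i})\cap c\subseteq\{l^k(0)+\overrightarrow{P_jP_i}\},$$ where $c$ is identified with its image.
   Context: aTAM at temperature 1: $T$ finite set of tile types; tiles $((x,y),t)\in\mathbb Z^2\times T$; adjacent tiles interact if abutting glues have equal type and strength $\ge1$; $\mathcal T=(T,\sigma,1)$ with finite connected seed $\sigma$; producible assemblies grow from $\sigma$ by single tile additions interacting with an existing tile. A path is a sequence $P=P_0P_1\dots$ of tiles with pairwise distinct positions, consecutive ones adjacent and interacting; $P_{a,\dots,b}=P_a\dots P_b$; $\overrightarrow{P_aP_b}=\mathrm{pos}(P_b)-\mathrm{pos}(P_a)$. $P$ is producible if its tiles avoid the positions of $\sigma$, $\sigma\cup\mathrm{asm}(P)$ is producible, and $P_0$ interacts with a tile of $\sigma$. $\mathrm{glue}_P(a)$ is the glue between $P_a,P_{a+1}$ with a type, a position (midpoint of the segment $\mathrm{pos}(P_a)\mathrm{pos}(P_{a+1})$) and direction (east/west/north/south according to $\mathrm{pos}(P_{a+1})-\mathrm{pos}(P_a)$). $\mathrm{emb}(P)$ is the polygonal curve through the positions of $P$. A glue pointing east or west is visible from the south (resp. north) if the vertical ray from its position downward (resp. upward) meets neither $\mathrm{emb}(P)$ nor $\sigma$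 (tile positions or unit segments between adjacent positions of $\sigma$). For a ray $l$, $l(0)$ is its starting point. Shield: $(i,j,k)$ with $0\le i<j\le k<|P|-1$ such that (1) $\mathrm{glue}_P(i),\mathrm{glue}_P(j)$ have the same type, are visible from the south and point east; (2) $\mathrm{glue}_P(k)$ is visible from the north, with $l^k$ the vertical ray from its position going north; (3) $\mathrm{emb}(P_{i,\dots,k})\cap(l^k+\overrightarrow{P_jP_i})\subseteq\{l^k(0)+\overrightarrow{P_jP_i}\}$. With $l^i$ the vertical ray from the position of $\mathrm{glue}_P(i)$ going south, the cut $c$ is the concatenation of $l^i$ traversed upward from $y=-\infty$ to the position of $\mathrm{glue}_P(i)$, the segment to $\mathrm{pos}(P_{i+1})$, $\mathrm{emb}(P_{i+1,\dots,k})$, the segment from $\mathrm{pos}(P_k)$ to the position of $\mathrm{glue}_P(k)$, and $l^k$. It is simple and its complement has two components; the workspace $\mathcal C$ is the image of $c$ together with the component containing all points $(x,0)$ with $x$ greater than every $x$-coordinate on $c$. *)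

(* Defs.v *)
From Stdlib Require Import Reals ZArith List Relations.
Open Scope R_scope.

Record glue := mkGlue { glabel : nat ; gstrength : nat }.
Record tiletype := mkTT { gN : glue ; gE : glue ; gS : glue ; gW : glue }.

Definition pos := (Z * Z)%type.
Definition tile := (pos * tiletype)%type.

Definition dummy_tile : tile :=
  ((0%Z, 0%Z), mkTT (mkGlue 0 0) (mkGlue 0 0) (mkGlue 0 0) (mkGlue 0 0)).

Definition pos_eqb (p q : pos) : bool :=
  (Z.eqb (fst p) (fst q) && Z.eqb (snd p) (snd q))%bool.

Definition pos_sub (p q : pos) : pos := (fst p - fst q, snd p - snd q)%Z.

Definition side_glue (t : tiletype) (d : pos) : option glue :=
  match d with
  | (Zpos xH, Z0) => Some (gE t)
  | (Zneg xH, Z0) => Some (gW t)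
  | (Z0, Zpos xH) => Some (gN t)
  | (Z0, Zneg xH) => Some (gS t)
  | _ => None
  end.

Definition interact (a b : tile) : Prop :=
  exists g, side_glue (snd a) (pos_sub (fst b) (fst a)) = Some g /\
            side_glue (snd b) (pos_sub (fst a) (fst b)) = Some g /\
            (1 <= gstrength g)%nat.

Definition adjacent (p q : pos) : Prop :=
  (Z.abs (fst p - fst q) + Z.abs (snd p - snd q) = 1)%Z.

Definition assembly := pos -> option tiletype.

Definition lookup (L : list tile) (q : pos) : option tiletype :=
  match find (fun t => pos_eqb (fst t) q) L with
  | Some t => Some (snd t)
  | None => None
  end.

Definition seed_asm (sigma : list tile) : assembly := lookup sigma.

Definition valid_seed (sigma : list tile) : Prop :=
  sigma <> nil /\ NoDup (map fst sigma) /\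
  forall a b, In a sigma -> In b sigma ->
    clos_refl_trans tile (fun x y => In x sigma /\ In y sigma /\ interact x y) a b.

Inductive producible (T : list tiletype) (sigma : assembly) : assembly -> Prop :=
| prod_seed : forall A, (forall q, A q = sigma q) -> producible T sigma A
| prod_step : forall A' A p t,
    producible T sigma A' -> A' p = None -> In t T ->
    (exists q u, A' q = Some u /\ interact (p, t) (q, u)) ->
    (forall q, A q = if pos_eqb q p then Some t else A' q) ->
    producible T sigma A.

Definition Pn (P : list tile) (a : nat) : tile := nth a P dummy_tile.

Definition is_path (P : list tile) : Prop :=
  NoDup (map fst P) /\
  forall a, (S a < length P)%nat -> interact (Pn P a) (Pn P (S a)).

Definition union_asm (sigma : list tile) (P : list tile) : assembly :=
  fun q => match lookup P q with Some t => Some t | None => seed_asm sigma q end.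

Definition producible_path (T : list tiletype) (sigma : list tile) (P : list tile) : Prop :=
  P <> nil /\ is_path P /\
  (forall a, In a P -> seed_asm sigma (fst a) = None) /\
  producible T (seed_asm sigma) (union_asm sigma P) /\
  (exists b, In b sigma /\ interact (Pn P 0) b).

Definition subpath (P : list tile) (a b : nat) : list tile :=
  firstn (S b - a) (skipn a P).

Definition point := (R * R)%type.
Definition toR (p : pos) : point := (IZR (fst p), IZR (snd p)).
Definition tpos (P : list tile) (a : nat) : point := toR (fst (Pn P a)).

Definition segment (a b : point) (z : point) : Prop :=
  exists t, 0 <= t <= 1 /\
    z = (fst a + t * (fst b - fst a), snd a + t * (snd b - snd a)).

Definition emb (P : list tile) (z : point) : Prop :=
  (exists a, (S a < length P)%nat /\ segment (tpos P a) (tpos P (S a)) z) \/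
  (exists a, (a < length P)%nat /\ z = tpos P a).

Definition seed_set (sigma : list tile) (z : point) : Prop :=
  (exists t, In t sigma /\ z = toR (fst t)) \/
  (exists t u, In t sigma /\ In u sigma /\ adjacent (fst t) (fst u) /\
               segment (toR (fst t)) (toR (fst u)) z).

Definition glue_type (P : list tile) (a : nat) : option glue :=
  side_glue (snd (Pn P a)) (pos_sub (fst (Pn P (S a))) (fst (Pn P a))).

Definition glue_pos (P : list tile) (a : nat) : point :=
  ((fst (tpos P a) + fst (tpos P (S a))) / 2,
   (snd (tpos P a) + snd (tpos P (S a))) / 2).

Definition points_east (P : list tile) (a : nat) : Prop :=
  pos_sub (fst (Pn P (S a))) (fst (Pn P a)) = (1%Z, 0%Z).
Definition points_west (P : list tile) (a : nat) : Prop :=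
  pos_sub (fst (Pn P (S a))) (fst (Pn P a)) = ((-1)%Z, 0%Z).

(* visibility (the ray minus its starting point, which lies on emb(P)) *)
Definition visible_south (sigma : list tile) (P : list tile) (a : nat) : Prop :=
  (points_east P a \/ points_west P a) /\
  forall s, 0 < s ->
    ~ emb P (fst (glue_pos P a), snd (glue_pos P a) - s) /\
    ~ seed_set sigma (fst (glue_pos P a), snd (glue_pos P a) - s).

Definition visible_north (sigma : list tile) (P : list tile) (a : nat) : Prop :=
  (points_east P a \/ points_west P a) /\
  forall s, 0 < s ->
    ~ emb P (fst (glue_pos P a), snd (glue_pos P a) + s) /\
    ~ seed_set sigma (fst (glue_pos P a), snd (glue_pos P a) + s).

Definition ray_north (o : point) (z : point) : Prop :=
  exists s, 0 <= s /\ z = (fst o, snd o + s).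
Definition ray_south (o : point) (z : point) : Prop :=
  exists s, 0 <= s /\ z = (fst o, snd o - s).

Definition vecJI (P : list tile) (i j : nat) : point :=
  (fst (tpos P i) - fst (tpos P j), snd (tpos P i) - snd (tpos P j)).

Definition translate (X : point -> Prop) (v : point) (z : point) : Prop :=
  X (fst z - fst v, snd z - snd v).

Definition lk_shift (P : list tile) (i j k : nat) : point -> Prop :=
  translate (ray_north (glue_pos P k)) (vecJI P i j).
Definition lk_shift0 (P : list tile) (i j k : nat) : point :=
  (fst (glue_pos P k) + fst (vecJI P i j), snd (glue_pos P k) + snd (vecJI P i j)).

Definition shield (sigma : list tile) (P : list tile) (i j k : nat) : Prop :=
  (i < j)%nat /\ (j <= k)%nat /\ (S k < length P)%nat /\
  glue_type P i = glue_type P j /\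
  visible_south sigma P i /\ visible_south sigma P j /\
  points_east P i /\ points_east P j /\
  visible_north sigma P k /\
  (forall z, emb (subpath P i k) z -> lk_shift P i j k z -> z = lk_shift0 P i j k).

Definition cut (P : list tile) (i k : nat) (z : point) : Prop :=
  ray_south (glue_pos P i) z \/
  segment (glue_pos P i) (tpos P (S i)) z \/
  emb (subpath P (S i) k) z \/
  segment (tpos P k) (glue_pos P k) z \/
  ray_north (glue_pos P k) z.

Definition cont_curve (f : R -> point) : Prop :=
  forall t, 0 <= t <= 1 -> forall eps, 0 < eps ->
    exists delta, 0 < delta /\
      forall s, 0 <= s <= 1 -> Rabs (s - t) < delta ->
        Rabs (fst (f s) - fst (f t)) < eps /\ Rabs (snd (f s) - snd (f t)) < eps.

Definition path_connected_in (X : point -> Prop) (a b : point) : Prop :=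
  exists f, cont_curve f /\ f 0 = a /\ f 1 = b /\
    forall t, 0 <= t <= 1 -> X (f t).

Definition workspace (c : point -> Prop) (z : point) : Prop :=
  c z \/
  exists x, (forall w, c w -> fst w < x) /\
            path_connected_in (fun w => ~ c w) (x, 0) z.

(* Main.v *)
Require Import Defs.
From Stdlib Require Import Reals ZArith List Lra Lia Bool Classical.
Open Scope R_scope.

Definition Rltb (a b : R) : bool := if Rlt_dec a b then true else false.
Definition Rleb (a b : R) : bool := if Rle_dec a b then true else false.
Definition Reqb (a b : R) : bool := if Req_dec_T a b then true else false.

Definition chi_seg (a b w : point) : bool :=
  Reqb (fst a) (fst b) && Rltb (fst w) (fst a) &&
  Rleb (Rmin (snd a) (snd b)) (snd w) && Rltb (snd w) (Rmax (snd a) (snd b)).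
Definition chi_down (v w : point) : bool := Rltb (fst w) (fst v) && Rltb (snd w) (snd v).
Definition chi_up (v w : point) : bool := Rltb (fst w) (fst v) && Rleb (snd v) (snd w).
Definition inH (v w : point) : bool := Rltb (fst w) (fst v) && Reqb (snd v) (snd w).

Definition good (d : R) (v w : point) : Prop :=
  (fst v = fst w \/ fst v >= fst w + d \/ fst v <= fst w - d) /\
  (snd v = snd w \/ snd v >= snd w + d \/ snd v <= snd w - d).

Lemma seg_vert (a b w : point) : fst a = fst b -> fst w = fst a ->
  Rmin (snd a) (snd b) <= snd w <= Rmax (snd a) (snd b) -> segment a b w.
Proof.
  destruct a as [a1 a2], b as [b1 b2], w as [w1 w2]; simpl; intros H1 H2 H3.
  destruct (Req_dec a2 b2) as [E|E].
  - subst. exists 0. rewrite Rmin_left, Rmax_left in H3 by lra. split; [lra|].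
    simpl; f_equal; lra.
  - exists ((w2 - a2) / (b2 - a2)).
    assert (Ht : (w2 - a2) / (b2 - a2) * (b2 - a2) = w2 - a2) by (field; lra).
    set (t := (w2 - a2) / (b2 - a2)) in *.
    destruct (Rle_dec a2 b2).
    + rewrite Rmin_left, Rmax_right in H3 by lra.
      assert (0 < b2 - a2) by lra.
      split; [split; nra|]. simpl; f_equal; nra.
    + rewrite Rmin_right, Rmax_left in H3 by lra.
      assert (b2 - a2 < 0) by lra.
      split; [split; nra|]. simpl; f_equal; nra.
Qed.

Lemma seg_horiz (a b w : point) : snd a = snd b -> snd w = snd a ->
  Rmin (fst a) (fst b) <= fst w <= Rmax (fst a) (fst b) -> segment a b w.
Proof.
  destruct a as [a1 a2], b as [b1 b2], w as [w1 w2]; simpl; intros H1 H2 H3.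
  destruct (Req_dec a1 b1) as [E|E].
  - subst. exists 0. rewrite Rmin_left, Rmax_left in H3 by lra. split; [lra|].
    simpl; f_equal; lra.
  - exists ((w1 - a1) / (b1 - a1)).
    assert (Ht : (w1 - a1) / (b1 - a1) * (b1 - a1) = w1 - a1) by (field; lra).
    set (t := (w1 - a1) / (b1 - a1)) in *.
    destruct (Rle_dec a1 b1).
    + rewrite Rmin_left, Rmax_right in H3 by lra.
      assert (0 < b1 - a1) by lra.
      split; [split; nra|]. simpl; f_equal; nra.
    + rewrite Rmin_right, Rmax_left in H3 by lra.
      assert (b1 - a1 < 0) by lra.
      split; [split; nra|]. simpl; f_equal; nra.
Qed.

Ltac dec_all :=
  repeat match goal with
  | |- context [Rlt_dec ?a ?b] => destruct (Rlt_dec a b)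
  | |- context [Rle_dec ?a ?b] => destruct (Rle_dec a b)
  | |- context [Req_dec_T ?a ?b] => destruct (Req_dec_T a b)
  end.

Ltac dec1 :=
  match goal with
  | |- context [Rlt_dec ?a ?b] => destruct (Rlt_dec a b)
  | |- context [Rle_dec ?a ?b] => destruct (Rle_dec a b)
  | |- context [Req_dec_T ?a ?b] => destruct (Req_dec_T a b)
  end.
Ltac solve_dec := repeat (dec1; simpl; try reflexivity; try (exfalso; lra)).

Lemma edge_lemma (d : R) (a b w w' : point) :
  good d a w -> good d b w -> (fst a = fst b \/ snd a = snd b) ->
  ~ segment a b w -> Rabs (fst w' - fst w) < d -> Rabs (snd w' - snd w) < d ->
  xorb (chi_seg a b w) (chi_seg a b w') = Rltb (snd w') (snd w) && xorb (inH a w) (inH b w).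
Proof.
  destruct a as [a1 a2], b as [b1 b2], w as [w1 w2], w' as [v1 v2].
  unfold good, chi_seg, inH, Rltb, Rleb, Reqb; simpl.
  intros Ga Gb Hr Hs H1 H2.
  apply Rabs_def2 in H1. apply Rabs_def2 in H2.
  destruct (Req_dec a1 b1) as [Ex|Ex].
  - subst b1.
    assert (Hy : w2 < Rmin a2 b2 \/ w2 > Rmax a2 b2 \/ a1 <> w1).
    { destruct (Req_dec a1 w1); [|auto].
      destruct (Rlt_dec w2 (Rmin a2 b2)); [auto|].
      destruct (Rgt_dec w2 (Rmax a2 b2)); [auto|].
      exfalso; apply Hs; apply seg_vert; simpl; auto; lra. }
    destruct (Rle_dec a2 b2).
    + rewrite Rmin_left, Rmax_right in * by lra.
      destruct Ga as [[Ga|[Ga|Ga]] [Ga'|[Ga'|Ga']]];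
      destruct Gb as [_ [Gb'|[Gb'|Gb']]]; solve_dec.
    + rewrite Rmin_right, Rmax_left in * by lra.
      destruct Ga as [[Ga|[Ga|Ga]] [Ga'|[Ga'|Ga']]];
      destruct Gb as [_ [Gb'|[Gb'|Gb']]]; solve_dec.
  - destruct Hr as [Hr|Hr]; [simpl in Hr; contradiction|]. simpl in Hr. subst b2.
    assert (Hx : a2 <> w2 \/ w1 < Rmin a1 b1 \/ w1 > Rmax a1 b1).
    { destruct (Req_dec a2 w2); [|auto].
      destruct (Rlt_dec w1 (Rmin a1 b1)); [auto|].
      destruct (Rgt_dec w1 (Rmax a1 b1)); [auto|].
      exfalso; apply Hs; apply seg_horiz; simpl; auto; lra. }
    destruct (Rle_dec a1 b1).
    + rewrite Rmin_left, Rmax_right in * by lra.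
      solve_dec.
    + rewrite Rmin_right, Rmax_left in * by lra.
      solve_dec.
Qed.

Lemma down_lemma (d : R) (v w w' : point) :
  good d v w -> ~ ray_south v w -> Rabs (fst w' - fst w) < d -> Rabs (snd w' - snd w) < d ->
  xorb (chi_down v w) (chi_down v w') = Rltb (snd w') (snd w) && inH v w.
Proof.
  destruct v as [a1 a2], w as [w1 w2], w' as [v1 v2].
  unfold good, chi_down, inH, Rltb, Rleb, Reqb, ray_south; simpl.
  intros Ga Hs H1 H2.
  apply Rabs_def2 in H1. apply Rabs_def2 in H2.
  assert (Hy : a1 <> w1 \/ w2 > a2).
  { destruct (Req_dec a1 w1); [|auto]. destruct (Rgt_dec w2 a2); [auto|].
    exfalso; apply Hs. exists (a2 - w2). split; [lra|]. f_equal; lra. }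
  destruct Ga as [[Ga|[Ga|Ga]] [Ga'|[Ga'|Ga']]]; solve_dec.
Qed.

Lemma up_lemma (d : R) (v w w' : point) :
  good d v w -> ~ ray_north v w -> Rabs (fst w' - fst w) < d -> Rabs (snd w' - snd w) < d ->
  xorb (chi_up v w) (chi_up v w') = Rltb (snd w') (snd w) && inH v w.
Proof.
  destruct v as [a1 a2], w as [w1 w2], w' as [v1 v2].
  unfold good, chi_up, inH, Rltb, Rleb, Reqb, ray_north; simpl.
  intros Ga Hs H1 H2.
  apply Rabs_def2 in H1. apply Rabs_def2 in H2.
  assert (Hy : a1 <> w1 \/ w2 < a2).
  { destruct (Req_dec a1 w1); [|auto]. destruct (Rlt_dec w2 a2); [auto|].
    exfalso; apply Hs. exists (w2 - a2). split; [lra|]. f_equal; lra. }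
  destruct Ga as [[Ga|[Ga|Ga]] [Ga'|[Ga'|Ga']]]; solve_dec.
Qed.

Fixpoint Nch (u : nat -> point) (n : nat) (w : point) : bool :=
  match n with
  | O => false
  | S n => xorb (Nch u n w) (chi_seg (u n) (u (S n)) w)
  end.

Definition Nfull (u : nat -> point) (n : nat) (up : bool) (w : point) : bool :=
  xorb (xorb (chi_down (u O) w) (Nch u n w))
       (if up then chi_up (u n) w else chi_down (u n) w).

Definition Cset (u : nat -> point) (n : nat) (up : bool) (z : point) : Prop :=
  ray_south (u O) z \/ (exists m, (m < n)%nat /\ segment (u m) (u (S m)) z) \/
  (if up then ray_north (u n) z else ray_south (u n) z).

Definition rect (u : nat -> point) (n : nat) : Prop :=
  forall m, (m < n)%nat -> fst (u m) = fst (u (S m)) \/ snd (u m) = snd (u (S m)).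

Lemma Nch_tele (d : R) u n w w' :
  (forall m, (m <= n)%nat -> good d (u m) w) -> rect u n ->
  (forall m, (m < n)%nat -> ~ segment (u m) (u (S m)) w) ->
  Rabs (fst w' - fst w) < d -> Rabs (snd w' - snd w) < d ->
  xorb (Nch u n w) (Nch u n w') = Rltb (snd w') (snd w) && xorb (inH (u O) w) (inH (u n) w).
Proof.
  intros G R HS H1 H2. induction n as [|n IH]; simpl.
  - rewrite xorb_nilpotent. destruct (Rltb _ _); reflexivity.
  - assert (E := edge_lemma d (u n) (u (S n)) w w' (G n ltac:(lia)) (G (S n) ltac:(lia))
             (R n ltac:(lia)) (HS n ltac:(lia)) H1 H2).
    assert (IH' : xorb (Nch u n w) (Nch u n w') =
       Rltb (snd w') (snd w) && xorb (inH (u 0%nat) w) (inH (u n) w)).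
    { apply IH; [intros m Hm; apply G; lia|intros m Hm; apply R; lia|intros m Hm; apply HS; lia]. }
    revert E IH'.
    destruct (Nch u n w), (Nch u n w'), (chi_seg (u n) (u (S n)) w),
      (chi_seg (u n) (u (S n)) w'), (Rltb _ _), (inH (u 0%nat) w), (inH (u n) w),
      (inH (u (S n)) w); simpl; congruence.
Qed.

Lemma good_exists (v w : point) : exists d, 0 < d /\ good d v w.
Proof.
  destruct (Req_dec (fst v) (fst w)) as [E1|E1];
  destruct (Req_dec (snd v) (snd w)) as [E2|E2].
  - exists 1. unfold good; split; [lra|]; auto.
  - exists (Rabs (snd v - snd w)). split; [apply Rabs_pos_lt; lra|].
    unfold good; split; [auto|]. unfold Rabs; destruct Rcase_abs; lra.
  - exists (Rabs (fst v - fst w)). split; [apply Rabs_pos_lt; lra|].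
    unfold good; split; [|auto]. unfold Rabs; destruct Rcase_abs; lra.
  - exists (Rmin (Rabs (fst v - fst w)) (Rabs (snd v - snd w))).
    assert (0 < Rabs (fst v - fst w)) by (apply Rabs_pos_lt; lra).
    assert (0 < Rabs (snd v - snd w)) by (apply Rabs_pos_lt; lra).
    split; [apply Rmin_glb_lt; auto|].
    assert (Rmin (Rabs (fst v - fst w)) (Rabs (snd v - snd w)) <= Rabs (fst v - fst w)) by apply Rmin_l.
    assert (Rmin (Rabs (fst v - fst w)) (Rabs (snd v - snd w)) <= Rabs (snd v - snd w)) by apply Rmin_r.
    revert H1 H2. unfold good, Rabs; destruct Rcase_abs; destruct Rcase_abs; intros; split; right; lra.
Qed.

Lemma good_mono d d' v w : good d v w -> 0 < d' <= d -> good d' v w.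
Proof. unfold good; intros [[A|[A|A]] [B|[B|B]]] H; split; lra. Qed.

Lemma good_all (u : nat -> point) n w : exists d, 0 < d /\ forall m, (m <= n)%nat -> good d (u m) w.
Proof.
  induction n as [|n [d [Hd G]]].
  - destruct (good_exists (u O) w) as [d [Hd G]]. exists d; split; auto.
    intros m Hm. replace m with O by lia. auto.
  - destruct (good_exists (u (S n)) w) as [d' [Hd' G']].
    exists (Rmin d d'). split; [apply Rmin_glb_lt; auto|].
    assert (Rmin d d' <= d) by apply Rmin_l. assert (Rmin d d' <= d') by apply Rmin_r.
    assert (0 < Rmin d d') by (apply Rmin_glb_lt; auto).
    intros m Hm. destruct (Nat.eq_dec m (S n)) as [->|].
    + apply good_mono with d'; auto; lra.
    + apply good_mono with d; [apply G; lia| lra].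
Qed.

Lemma local_const u n up w : rect u n -> ~ Cset u n up w ->
  exists d, 0 < d /\ forall w', Rabs (fst w' - fst w) < d -> Rabs (snd w' - snd w) < d ->
    Nfull u n up w' = Nfull u n up w.
Proof.
  intros R HC. destruct (good_all u n w) as [d [Hd G]].
  exists d; split; auto. intros w' H1 H2.
  assert (T := Nch_tele d u n w w' G R).
  assert (D0 := down_lemma d (u O) w w' (G O ltac:(lia))).
  assert (Dn := down_lemma d (u n) w w' (G n ltac:(lia))).
  assert (Un := up_lemma d (u n) w w' (G n ltac:(lia))).
  unfold Cset in HC.
  assert (T' : xorb (Nch u n w) (Nch u n w') = Rltb (snd w') (snd w) && xorb (inH (u O) w) (inH (u n) w)).
  { apply T; auto. intros m Hm Hs; apply HC; right; left; eauto. }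
  assert (D0' : xorb (chi_down (u O) w) (chi_down (u O) w') = Rltb (snd w') (snd w) && inH (u O) w).
  { apply D0; auto. }
  unfold Nfull. destruct up.
  - assert (Un' : xorb (chi_up (u n) w) (chi_up (u n) w') = Rltb (snd w') (snd w) && inH (u n) w).
    { apply Un; auto. }
    revert T' D0' Un'.
    destruct (Nch u n w), (Nch u n w'), (chi_down (u O) w), (chi_down (u O) w'),
      (chi_up (u n) w), (chi_up (u n) w'), (Rltb _ _), (inH (u O) w), (inH (u n) w);
      simpl; congruence.
  - assert (Dn' : xorb (chi_down (u n) w) (chi_down (u n) w') = Rltb (snd w') (snd w) && inH (u n) w).
    { apply Dn; auto. }
    revert T' D0' Dn'.
    destruct (Nch u n w), (Nch u n w'), (chi_down (u O) w), (chi_down (u O) w'),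
      (chi_down (u n) w), (chi_down (u n) w'), (Rltb _ _), (inH (u O) w), (inH (u n) w);
      simpl; congruence.
Qed.

Lemma loc_const_interval (g : R -> bool) :
  (forall t, 0 <= t <= 1 -> exists eta, 0 < eta /\
     forall s, 0 <= s <= 1 -> Rabs (s - t) < eta -> g s = g t) -> g 1 = g 0.
Proof.
  intros H.
  set (E := fun t => 0 <= t <= 1 /\ forall s, 0 <= s <= t -> g s = g 0).
  assert (Eb : bound E). { exists 1. intros x [Hx _]. lra. }
  assert (E0 : E 0). { split; [lra|]. intros s Hs. replace s with 0 by lra. auto. }
  destruct (completeness E Eb (ex_intro _ 0 E0)) as [S [HS1 HS2]].
  assert (S0 : 0 <= S) by (apply HS1; auto).
  assert (S1 : S <= 1) by (apply HS2; intros x [Hx _]; lra).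
  destruct (H S (conj S0 S1)) as [eta [Heta HH]].
  assert (Ht : exists t, E t /\ S - eta < t).
  { apply NNPP; intro N.
    assert (S <= S - eta); [|lra].
    apply HS2. intros x Ex. destruct (Rle_dec x (S - eta)); auto.
    exfalso; apply N; exists x; split; auto; lra. }
  destruct Ht as [t [[Et1 Et2] Ht]].
  assert (tS : t <= S) by (apply HS1; split; auto).
  assert (gS : g S = g 0).
  { rewrite <- (HH t); [apply Et2; lra|lra|]. rewrite Rabs_left1; lra. }
  set (t' := Rmin 1 (S + eta / 2)).
  assert (t'1 : t' <= 1) by apply Rmin_l.
  assert (t'2 : t' <= S + eta/2) by apply Rmin_r.
  assert (t'3 : t' = 1 \/ t' = S + eta/2).
  { unfold t', Rmin; destruct Rle_dec; auto. }
  assert (Et' : E t').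
  { split; [split; [destruct t'3; lra|lra]|].
    intros s Hs. destruct (Rle_dec s t); [apply Et2; lra|].
    rewrite HH; auto; [lra|]. apply Rabs_def1; lra. }
  assert (t' <= S) by (apply HS1; auto).
  assert (S = 1) by (destruct t'3; lra).
  rewrite <- gS. subst S. reflexivity.
Qed.

Lemma curve_const u n up f : rect u n -> cont_curve f ->
  (forall t, 0 <= t <= 1 -> ~ Cset u n up (f t)) ->
  Nfull u n up (f 1) = Nfull u n up (f 0).
Proof.
  intros R Hf HC. apply (loc_const_interval (fun t => Nfull u n up (f t))).
  intros t Ht.
  destruct (local_const u n up (f t) R (HC t Ht)) as [d [Hd Hl]].
  destruct (Hf t Ht d Hd) as [eta [He Hs]].
  exists eta; split; auto. intros s Hs1 Hs2.
  destruct (Hs s Hs1 Hs2). apply Hl; auto.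
Qed.

Definition segf (a b : point) (t : R) : point :=
  (fst a + t * (fst b - fst a), snd a + t * (snd b - snd a)).

Lemma segf_cont a b : cont_curve (segf a b).
Proof.
  intros t Ht eps Heps.
  set (K := Rabs (fst b - fst a) + Rabs (snd b - snd a) + 1).
  assert (K1 : 1 <= K). { unfold K. pose proof (Rabs_pos (fst b - fst a)).
    pose proof (Rabs_pos (snd b - snd a)). lra. }
  exists (eps / K). split. { apply Rdiv_lt_0_compat; lra. }
  intros s Hs Hst. unfold segf; simpl.
  assert (Hd : eps / K * K = eps) by (field; lra).
  assert (A1 : Rabs (fst b - fst a) <= K). { unfold K. pose proof (Rabs_pos (snd b - snd a)). lra. }
  assert (A2 : Rabs (snd b - snd a) <= K). { unfold K. pose proof (Rabs_pos (fst b - fst a)). lra. }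
  pose proof (Rabs_pos (s - t)).
  replace (fst a + s * (fst b - fst a) - (fst a + t * (fst b - fst a))) with ((s - t) * (fst b - fst a)) by ring.
  replace (snd a + s * (snd b - snd a) - (snd a + t * (snd b - snd a))) with ((s - t) * (snd b - snd a)) by ring.
  rewrite !Rabs_mult. split.
  - pose proof (Rabs_pos (fst b - fst a)). nra.
  - pose proof (Rabs_pos (snd b - snd a)). nra.
Qed.

Lemma segf_seg a b t : 0 <= t <= 1 -> segment a b (segf a b t).
Proof. intros H. exists t. split; auto. Qed.

Lemma segf0 a b : segf a b 0 = a.
Proof. destruct a; unfold segf; simpl; f_equal; ring. Qed.
Lemma segf1 a b : segf a b 1 = b.
Proof. destruct a, b; unfold segf; simpl; f_equal; ring. Qed.

Lemma seg_const u n up a b : rect u n ->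
  (forall z, segment a b z -> ~ Cset u n up z) -> Nfull u n up a = Nfull u n up b.
Proof.
  intros R H.
  assert (E := curve_const u n up (segf a b) R (segf_cont a b)).
  rewrite segf0, segf1 in E. symmetry; apply E.
  intros t Ht. apply H, segf_seg; auto.
Qed.

Lemma Nch_right u n w : (forall m, (m <= n)%nat -> fst (u m) <= fst w) -> Nch u n w = false.
Proof.
  induction n; simpl; intros H; auto. rewrite IHn by (intros; apply H; lia).
  unfold chi_seg, Rltb. destruct (Rlt_dec (fst w) (fst (u n))).
  - specialize (H n ltac:(lia)). lra.
  - rewrite !andb_false_r, andb_false_l. reflexivity.
Qed.

Lemma Nfull_right u n up w : (forall m, (m <= n)%nat -> fst (u m) <= fst w) -> Nfull u n up w = false.
Proof.
  intros H. unfold Nfull. rewrite Nch_right by auto.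
  assert (H0 := H O ltac:(lia)). assert (Hn := H n ltac:(lia)).
  unfold chi_down, chi_up, Rltb. destruct (Rlt_dec (fst w) (fst (u O))); [lra|].
  destruct (Rlt_dec (fst w) (fst (u n))); [lra|]. destruct up; reflexivity.
Qed.

Lemma Nch_top u n w : (forall m, (m <= n)%nat -> snd (u m) < snd w) -> Nch u n w = false.
Proof.
  induction n; simpl; intros H; auto. rewrite IHn by (intros; apply H; lia).
  unfold chi_seg, Rltb. destruct (Rlt_dec (snd w) (Rmax (snd (u n)) (snd (u (S n))))).
  - exfalso. assert (H1 := H n ltac:(lia)). assert (H2 := H (S n) ltac:(lia)).
    unfold Rmax in r; destruct Rle_dec in r; lra.
  - rewrite !andb_false_r. reflexivity.
Qed.

Lemma Nfull_top u n up w : (forall m, (m <= n)%nat -> snd (u m) < snd w) ->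
  Nfull u n up w = if up then Rltb (fst w) (fst (u n)) else false.
Proof.
  intros H. unfold Nfull. rewrite Nch_top by auto.
  assert (H0 := H O ltac:(lia)). assert (Hn := H n ltac:(lia)).
  unfold chi_down, chi_up, Rltb, Rleb.
  destruct (Rlt_dec (snd w) (snd (u O))); [lra|].
  destruct (Rlt_dec (snd w) (snd (u n))); [lra|].
  destruct (Rle_dec (snd (u n)) (snd w)); [|lra].
  rewrite !andb_false_r. destruct up; simpl; auto.
  destruct (Rlt_dec (fst w) (fst (u n))); auto.
Qed.

Lemma Nch_bot u n w : (forall m, (m <= n)%nat -> snd w < snd (u m)) -> Nch u n w = false.
Proof.
  induction n; simpl; intros H; auto. rewrite IHn by (intros; apply H; lia).
  unfold chi_seg, Rleb. destruct (Rle_dec (Rmin (snd (u n)) (snd (u (S n)))) (snd w)).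
  - exfalso. assert (H1 := H n ltac:(lia)). assert (H2 := H (S n) ltac:(lia)).
    unfold Rmin in r; destruct Rle_dec in r; lra.
  - rewrite !andb_false_r. reflexivity.
Qed.

Lemma Nfull_bot u n w : (forall m, (m <= n)%nat -> snd w < snd (u m)) ->
  Nfull u n false w = xorb (Rltb (fst w) (fst (u O))) (Rltb (fst w) (fst (u n))).
Proof.
  intros H. unfold Nfull. rewrite Nch_bot by auto.
  assert (H0 := H O ltac:(lia)). assert (Hn := H n ltac:(lia)).
  unfold chi_down, Rltb.
  destruct (Rlt_dec (snd w) (snd (u O))); [|lra].
  destruct (Rlt_dec (snd w) (snd (u n))); [|lra].
  rewrite !andb_true_r. simpl. destruct (Rlt_dec (fst w) (fst (u O))); auto.
Qed.

Lemma bound_y (u : nat -> point) n : exists Y, forall m, (m <= n)%nat -> Rabs (snd (u m)) < Y.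
Proof.
  induction n as [|n [Y HY]].
  - exists (Rabs (snd (u O)) + 1). intros m Hm. replace m with O by lia. lra.
  - exists (Rmax Y (Rabs (snd (u (S n))) + 1)). intros m Hm.
    assert (Y <= Rmax Y (Rabs (snd (u (S n))) + 1)) by apply Rmax_l.
    assert (Rabs (snd (u (S n))) + 1 <= Rmax Y (Rabs (snd (u (S n))) + 1)) by apply Rmax_r.
    destruct (Nat.eq_dec m (S n)) as [->|]; [lra|].
    specialize (HY m ltac:(lia)). lra.
Qed.

Definition unitZ (a b : Z * Z) : Prop :=
  (fst b = fst a + 1 /\ snd b = snd a)%Z \/ (fst b = fst a - 1 /\ snd b = snd a)%Z \/
  (fst b = fst a /\ snd b = snd a + 1)%Z \/ (fst b = fst a /\ snd b = snd a - 1)%Z.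

Definition mid (a b : Z * Z) : point :=
  ((IZR (fst a) + IZR (fst b)) / 2, (IZR (snd a) + IZR (snd b)) / 2).
Definition hpt (L : Z * Z) (t : R) : point := (IZR (fst L) + t, IZR (snd L)).
Definition vpt (L : Z * Z) (t : R) : point := (IZR (fst L), IZR (snd L) + t).
Definition sameset (a b c d : Z * Z) : Prop := (a = c /\ b = d) \/ (a = d /\ b = c).

Lemma Z01 (n : Z) (t : R) : IZR n = t -> 0 <= t <= 1 -> (n = 0%Z /\ t = 0) \/ (n = 1%Z /\ t = 1).
Proof.
  intros E H. assert (A : (0 <= n <= 1)%Z) by (split; apply le_IZR; lra).
  subst t. destruct (Z.eq_dec n 0) as [->|]; [left; auto|].
  assert (n = 1%Z) as -> by lia. right; auto.
Qed.

Lemma Zm101 (n : Z) (t : R) : IZR n = t -> -1 <= t <= 1 ->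
  (n = (-1)%Z /\ t = -1) \/ (n = 0%Z /\ t = 0) \/ (n = 1%Z /\ t = 1).
Proof.
  intros E H. assert (A : (-1 <= n <= 1)%Z) by (split; apply le_IZR; lra).
  subst t. assert (Hn : n = (-1)%Z \/ n = 0%Z \/ n = 1%Z) by lia. destruct Hn as [ -> | [ -> | -> ] ]; auto.
Qed.

Lemma Zopen (n : Z) (t : R) : IZR n = t -> -1 < t < 1 -> n = 0%Z.
Proof. intros E H. assert (A : (-1 < n < 1)%Z) by (split; apply lt_IZR; lra). lia. Qed.

Lemma not_half (n : Z) : IZR n <> /2.
Proof.
  intros E. assert (A : (0 < n < 1)%Z) by (split; apply lt_IZR; lra). lia.
Qed.

Lemma norm_seg a b z : unitZ a b -> segment (toR a) (toR b) z ->
  exists L t, 0 <= t <= 1 /\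
   ((z = hpt L t /\ sameset a b L (fst L + 1, snd L)%Z /\ mid a b = hpt L (/2)) \/
    (z = vpt L t /\ sameset a b L (fst L, snd L + 1)%Z /\ mid a b = vpt L (/2))).
Proof.
  destruct a as [a1 a2], b as [b1 b2]. unfold unitZ, toR, sameset, mid, hpt, vpt; simpl.
  intros U [t [Ht ->]]. simpl.
  destruct U as [[-> ->]|[[-> ->]|[[-> ->]|[-> ->]]]]; rewrite ?plus_IZR, ?minus_IZR.
  - exists (a1, a2), t; simpl. split; auto. left. split; [f_equal; ring|].
    split; [left; auto|f_equal; field].
  - exists (a1 - 1, a2)%Z, (1 - t); simpl. split; [lra|]. left.
    rewrite minus_IZR. split; [f_equal; ring|].
    split; [right; split; f_equal; lia|f_equal; field].
  - exists (a1, a2), t; simpl. split; auto. right. split; [f_equal; ring|].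
    split; [left; auto|f_equal; field].
  - exists (a1, a2 - 1)%Z, (1 - t); simpl. split; [lra|]. right.
    rewrite minus_IZR. split; [f_equal; ring|].
    split; [right; split; f_equal; lia|f_equal; field].
Qed.

Lemma pair_eq (a b c d : R) : a = c -> b = d -> (a, b) = (c, d).
Proof. intros -> ->; auto. Qed.

Lemma inter a b c d z : unitZ a b -> unitZ c d ->
  segment (toR a) (toR b) z -> segment (toR c) (toR d) z ->
  sameset a b c d \/ exists p, (p = a \/ p = b) /\ (p = c \/ p = d) /\ z = toR p.
Proof.
  intros U1 U2 S1 S2.
  destruct (norm_seg a b z U1 S1) as [[L1 L2] [t [Ht H1]]].
  destruct (norm_seg c d z U2 S2) as [[M1 M2] [s [Hs H2]]].
  unfold hpt, vpt, sameset, toR in *; simpl in *.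
  destruct H1 as [[E1 [Q1 _]]|[E1 [Q1 _]]]; destruct H2 as [[E2 [Q2 _]]|[E2 [Q2 _]]];
    rewrite E1 in E2; injection E2; intros F2 F1.
  - apply eq_IZR in F2. subst M2.
    assert (F : IZR (L1 - M1) = s - t) by (rewrite minus_IZR; lra).
    destruct (Zm101 _ _ F ltac:(lra)) as [[F3 F4]|[[F3 F4]|[F3 F4]]].
    + right. exists (L1 + 1, L2)%Z. split; [destruct Q1 as [[_ ->]|[-> _]]; auto|].
      split; [destruct Q2 as [[-> _]|[_ ->]]; [left|right]; f_equal; lia|].
      rewrite E1; simpl. rewrite plus_IZR. apply pair_eq; lra.
    + left. assert (L1 = M1) by lia. subst M1.
      destruct Q1 as [[-> ->]|[-> ->]]; destruct Q2 as [[-> ->]|[-> ->]]; auto.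
    + right. exists (L1, L2). split; [destruct Q1 as [[-> _]|[_ ->]]; auto|].
      split; [destruct Q2 as [[_ ->]|[-> _]]; [right|left]; f_equal; lia|].
      rewrite E1; simpl. apply pair_eq; lra.
  - assert (F : IZR (M1 - L1) = t) by (rewrite minus_IZR; lra).
    assert (G : IZR (L2 - M2) = s) by (rewrite minus_IZR; lra).
    right. exists (M1, L2). destruct (Z01 _ _ F Ht) as [[F3 F4]|[F3 F4]];
      destruct (Z01 _ _ G Hs) as [[G3 G4]|[G3 G4]].
    + split; [destruct Q1 as [[-> _]|[_ ->]]; [left|right]; f_equal; lia|].
      split; [destruct Q2 as [[-> _]|[_ ->]]; [left|right]; f_equal; lia|].
      rewrite E1; simpl; apply pair_eq; [rewrite <- F, minus_IZR|]; lra.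
    + split; [destruct Q1 as [[-> _]|[_ ->]]; [left|right]; f_equal; lia|].
      split; [destruct Q2 as [[_ ->]|[-> _]]; [right|left]; f_equal; lia|].
      rewrite E1; simpl; apply pair_eq; [rewrite <- F, minus_IZR|]; lra.
    + split; [destruct Q1 as [[_ ->]|[-> _]]; [right|left]; f_equal; lia|].
      split; [destruct Q2 as [[-> _]|[_ ->]]; [left|right]; f_equal; lia|].
      rewrite E1; simpl; apply pair_eq; [rewrite <- F, minus_IZR|]; lra.
    + split; [destruct Q1 as [[_ ->]|[-> _]]; [right|left]; f_equal; lia|].
      split; [destruct Q2 as [[_ ->]|[-> _]]; [right|left]; f_equal; lia|].
      rewrite E1; simpl; apply pair_eq; [rewrite <- F, minus_IZR|]; lra.
  - assert (F : IZR (L1 - M1) = s) by (rewrite minus_IZR; lra).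
    assert (G : IZR (M2 - L2) = t) by (rewrite minus_IZR; lra).
    right. exists (L1, M2). destruct (Z01 _ _ F Hs) as [[F3 F4]|[F3 F4]];
      destruct (Z01 _ _ G Ht) as [[G3 G4]|[G3 G4]].
    + split; [destruct Q1 as [[-> _]|[_ ->]]; [left|right]; f_equal; lia|].
      split; [destruct Q2 as [[-> _]|[_ ->]]; [left|right]; f_equal; lia|].
      rewrite E1; simpl; apply pair_eq; [|rewrite <- G, minus_IZR]; lra.
    + split; [destruct Q1 as [[_ ->]|[-> _]]; [right|left]; f_equal; lia|].
      split; [destruct Q2 as [[-> _]|[_ ->]]; [left|right]; f_equal; lia|].
      rewrite E1; simpl; apply pair_eq; [|rewrite <- G, minus_IZR]; lra.
    + split; [destruct Q1 as [[-> _]|[_ ->]]; [left|right]; f_equal; lia|].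
      split; [destruct Q2 as [[_ ->]|[-> _]]; [right|left]; f_equal; lia|].
      rewrite E1; simpl; apply pair_eq; [|rewrite <- G, minus_IZR]; lra.
    + split; [destruct Q1 as [[_ ->]|[-> _]]; [right|left]; f_equal; lia|].
      split; [destruct Q2 as [[_ ->]|[-> _]]; [right|left]; f_equal; lia|].
      rewrite E1; simpl; apply pair_eq; [|rewrite <- G, minus_IZR]; lra.
  - apply eq_IZR in F1. subst M1.
    assert (F : IZR (L2 - M2) = s - t) by (rewrite minus_IZR; lra).
    destruct (Zm101 _ _ F ltac:(lra)) as [[F3 F4]|[[F3 F4]|[F3 F4]]].
    + right. exists (L1, L2 + 1)%Z. split; [destruct Q1 as [[_ ->]|[-> _]]; auto|].
      split; [destruct Q2 as [[-> _]|[_ ->]]; [left|right]; f_equal; lia|].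
      rewrite E1; simpl. rewrite plus_IZR. apply pair_eq; lra.
    + left. assert (L2 = M2) by lia. subst M2.
      destruct Q1 as [[-> ->]|[-> ->]]; destruct Q2 as [[-> ->]|[-> ->]]; auto.
    + right. exists (L1, L2). split; [destruct Q1 as [[-> _]|[_ ->]]; auto|].
      split; [destruct Q2 as [[_ ->]|[-> _]]; [right|left]; f_equal; lia|].
      rewrite E1; simpl. apply pair_eq; lra.
Qed.

Definition ppos (P : list tile) (m : nat) : Z * Z := fst (Pn P m).
Definition edge (P : list tile) (m : nat) (z : point) : Prop :=
  segment (tpos P m) (tpos P (S m)) z.

Lemma tpos_pos P m : tpos P m = toR (ppos P m).
Proof. reflexivity. Qed.
Lemma glue_mid P m : glue_pos P m = mid (ppos P m) (ppos P (S m)).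
Proof. reflexivity. Qed.

Lemma side_glue_unit t d g : side_glue t d = Some g ->
  d = (1, 0)%Z \/ d = (-1, 0)%Z \/ d = (0, 1)%Z \/ d = (0, -1)%Z.
Proof.
  destruct d as [x y]. unfold side_glue.
  destruct x as [|[p|p|]|[p|p|]]; destruct y as [|[q|q|]|[q|q|]]; try discriminate; auto.
Qed.

Lemma step_unit P m : is_path P -> (S m < length P)%nat -> unitZ (ppos P m) (ppos P (S m)).
Proof.
  intros [_ H] Hm. destruct (H m Hm) as [g [G _]].
  apply side_glue_unit in G. unfold ppos, unitZ, pos_sub in *.
  destruct (fst (Pn P m)) as [a1 a2], (fst (Pn P (S m))) as [b1 b2]; simpl in *.
  destruct G as [G|[G|[G|G]]]; injection G; intros; lia.
Qed.

Lemma pdist P m n : is_path P -> (m < length P)%nat -> (n < length P)%nat ->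
  ppos P m = ppos P n -> m = n.
Proof.
  intros [ND0 _] Hm Hn E. destruct (NoDup_nth (map fst P) (fst dummy_tile)) as [F _]. assert (ND := F ND0).
  apply (ND m n); rewrite ?length_map; auto.
  rewrite !map_nth. exact E.
Qed.

Lemma L4 P m n z : is_path P -> (S m < length P)%nat -> (S n < length P)%nat -> (m < n)%nat ->
  edge P m z -> edge P n z -> n = S m /\ z = tpos P n.
Proof.
  intros HP Hm Hn Hmn E1 E2. unfold edge in *. rewrite !tpos_pos in *.
  destruct (inter _ _ _ _ z (step_unit P m HP Hm) (step_unit P n HP Hn) E1 E2)
    as [[[A B]|[A B]]|[p [A [B C]]]].
  - apply pdist in A; auto; lia.
  - apply pdist in A; auto; lia.
  - destruct A as [ -> | -> ]; destruct B as [B|B].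
    + apply pdist in B; auto; lia.
    + apply pdist in B; auto; lia.
    + apply pdist in B; auto; [|lia]. split; [lia|]. rewrite C; subst; reflexivity.
    + apply pdist in B; auto; lia.
Qed.

Lemma glue_in_edge P m : edge P m (glue_pos P m).
Proof.
  unfold edge, glue_pos. exists (/2). split; [lra|].
  destruct (tpos P m), (tpos P (S m)); simpl. f_equal; field.
Qed.

Lemma glue_not_lattice P m p : is_path P -> (S m < length P)%nat -> glue_pos P m <> toR p.
Proof.
  intros HP Hm E.
  assert (G := glue_in_edge P m). unfold edge in G. rewrite !tpos_pos in G.
  destruct (norm_seg _ _ _ (step_unit P m HP Hm) G) as [L [t [Ht [[_ [_ M]]|[_ [_ M]]]]]];
  rewrite <- glue_mid, E in M; unfold toR, hpt, vpt in M; injection M; intros M2 M1.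
  - apply (not_half (fst p - fst L)). rewrite minus_IZR. lra.
  - apply (not_half (snd p - snd L)). rewrite minus_IZR. lra.
Qed.

Lemma glue_inj P m n : is_path P -> (S m < length P)%nat -> (S n < length P)%nat ->
  glue_pos P m = glue_pos P n -> m = n.
Proof.
  intros HP Hm Hn E.
  assert (G1 := glue_in_edge P m). assert (G2 := glue_in_edge P n).
  rewrite E in G1. unfold edge in *. rewrite !tpos_pos in *.
  destruct (inter _ _ _ _ _ (step_unit P m HP Hm) (step_unit P n HP Hn) G1 G2)
    as [[[A B]|[A B]]|[p [A [B C]]]].
  - apply pdist in A; auto; lia.
  - apply pdist in A; auto; [|lia]. apply pdist in B; auto; lia.
  - exfalso. apply (glue_not_lattice P n p HP Hn C).
Qed.

Lemma nonint P m z n0 : is_path P -> (S m < length P)%nat -> edge P m z ->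
  IZR n0 < fst z < IZR n0 + 1 -> glue_pos P m = (IZR n0 + /2, snd z).
Proof.
  intros HP Hm E H. unfold edge in E. rewrite !tpos_pos in E.
  destruct (norm_seg _ _ _ (step_unit P m HP Hm) E) as [L [t [Ht [[Z1 [_ M]]|[Z1 [_ M]]]]]];
  rewrite <- glue_mid in M; rewrite M; subst z; unfold hpt, vpt in *; simpl in *.
  - assert (F : IZR (fst L - n0) = (IZR (fst L) - IZR n0)) by (rewrite minus_IZR; auto).
    assert (fst L - n0 = 0)%Z by (apply (Zopen _ _ F); lra).
    assert (fst L = n0) as -> by lia. auto.
  - exfalso. assert (F : (0 < fst L - n0 < 1)%Z).
    { split; apply lt_IZR; rewrite minus_IZR; simpl; lra. }
    lia.
Qed.

Lemma pos_east P m : points_east P m ->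
  ppos P (S m) = (fst (ppos P m) + 1, snd (ppos P m))%Z.
Proof.
  unfold points_east, pos_sub, ppos. destruct (fst (Pn P (S m))), (fst (Pn P m)); simpl.
  intros E; injection E; intros; f_equal; lia.
Qed.
Lemma pos_west P m : points_west P m ->
  ppos P (S m) = (fst (ppos P m) - 1, snd (ppos P m))%Z.
Proof.
  unfold points_west, pos_sub, ppos. destruct (fst (Pn P (S m))), (fst (Pn P m)); simpl.
  intros E; injection E; intros; f_equal; lia.
Qed.

Lemma glue_east P m : points_east P m ->
  glue_pos P m = (IZR (fst (ppos P m)) + /2, IZR (snd (ppos P m))).
Proof.
  intros E. rewrite glue_mid, (pos_east P m E). unfold mid; simpl.
  rewrite plus_IZR. f_equal; field.
Qed.
Lemma glue_west P m : points_west P m ->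
  glue_pos P m = (IZR (fst (ppos P m)) - /2, IZR (snd (ppos P m))).
Proof.
  intros E. rewrite glue_mid, (pos_west P m E). unfold mid; simpl.
  rewrite minus_IZR. f_equal; field.
Qed.

Lemma edge_east P m z : points_east P m -> edge P m z ->
  exists t, 0 <= t <= 1 /\ z = (IZR (fst (ppos P m)) + t, IZR (snd (ppos P m))).
Proof.
  intros E [t [Ht ->]]. exists t. split; auto.
  rewrite !tpos_pos, (pos_east P m E). unfold toR; simpl. rewrite plus_IZR. f_equal; ring.
Qed.
Lemma edge_west P m z : points_west P m -> edge P m z ->
  exists t, 0 <= t <= 1 /\ z = (IZR (fst (ppos P m)) - t, IZR (snd (ppos P m))).
Proof.
  intros E [t [Ht ->]]. exists t. split; auto.
  rewrite !tpos_pos, (pos_west P m E). unfold toR; simpl. rewrite minus_IZR. f_equal; ring.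
Qed.

Lemma edge_in_emb P m z : (S m < length P)%nat -> edge P m z -> emb P z.
Proof. intros H E. left. exists m. auto. Qed.
Lemma glue_in_emb P m : (S m < length P)%nat -> emb P (glue_pos P m).
Proof. intros H. apply (edge_in_emb P m); auto. apply glue_in_edge. Qed.

Lemma length_subpath P a b : (b < length P)%nat -> (a <= b)%nat ->
  length (subpath P a b) = (S b - a)%nat.
Proof.
  intros H1 H2. unfold subpath. rewrite length_firstn, length_skipn. lia.
Qed.

Lemma Pn_subpath P a b t : (b < length P)%nat -> (a <= b)%nat -> (t <= b - a)%nat ->
  Pn (subpath P a b) t = Pn P (a + t).
Proof.
  intros H1 H2 H3. unfold Pn, subpath. rewrite nth_firstn.
  destruct (Nat.ltb_spec t (S b - a)); [|lia]. rewrite nth_skipn. auto.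
Qed.

Lemma tpos_subpath P a b t : (b < length P)%nat -> (a <= b)%nat -> (t <= b - a)%nat ->
  tpos (subpath P a b) t = tpos P (a + t).
Proof. intros. unfold tpos. rewrite Pn_subpath; auto. Qed.

Lemma emb_subpath_inv P a b z : (b < length P)%nat -> (a <= b)%nat ->
  emb (subpath P a b) z ->
  (exists m, (a <= m < b)%nat /\ edge P m z) \/ (exists m, (a <= m <= b)%nat /\ z = tpos P m).
Proof.
  intros H1 H2 [[t [Ht Hs]]|[t [Ht ->]]]; rewrite length_subpath in Ht by auto.
  - left. exists (a + t)%nat. split; [lia|]. unfold edge.
    rewrite !tpos_subpath in Hs by (auto; lia). replace (S (a + t)) with (a + S t)%nat by lia. auto.
  - right. exists (a + t)%nat. split; [lia|]. apply tpos_subpath; auto; lia.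
Qed.

Lemma emb_subpath_edge P a b m z : (b < length P)%nat -> (a <= m < b)%nat ->
  edge P m z -> emb (subpath P a b) z.
Proof.
  intros H1 H2 E. left. exists (m - a)%nat. rewrite length_subpath by lia. split; [lia|].
  rewrite !tpos_subpath by lia. replace (a + (m - a))%nat with m by lia.
  replace (a + S (m - a))%nat with (S m) by lia. auto.
Qed.

Lemma emb_subpath_vertex P a b m : (b < length P)%nat -> (a <= m <= b)%nat ->
  emb (subpath P a b) (tpos P m).
Proof.
  intros H1 H2. right. exists (m - a)%nat. rewrite length_subpath by lia. split; [lia|].
  rewrite !tpos_subpath by lia. replace (a + (m - a))%nat with m by lia. auto.
Qed.

Lemma subseg_r (A B z : point) :
  segment (((fst A + fst B) / 2), ((snd A + snd B) / 2)) B z -> segment A B z.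
Proof.
  intros [t [Ht ->]]. exists ((1 + t) / 2). split; [lra|]. simpl. f_equal; field.
Qed.
Lemma subseg_l (A B z : point) :
  segment A (((fst A + fst B) / 2), ((snd A + snd B) / 2)) z -> segment A B z.
Proof.
  intros [t [Ht ->]]. exists (t / 2). split; [lra|]. simpl. f_equal; field.
Qed.

Definition ugen (P : list tile) (a b m : nat) : point :=
  if Nat.eqb m 0 then glue_pos P a
  else if Nat.leb m (b - a) then tpos P (a + m) else glue_pos P b.

Lemma ugen_0 P a b : ugen P a b 0 = glue_pos P a.
Proof. reflexivity. Qed.
Lemma ugen_mid P a b m : (1 <= m <= b - a)%nat -> ugen P a b m = tpos P (a + m).
Proof.
  intros H. unfold ugen. destruct (Nat.eqb_spec m 0); [lia|].
  destruct (Nat.leb_spec m (b - a)); [auto|lia].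
Qed.
Lemma ugen_last P a b : ugen P a b (S (b - a)) = glue_pos P b.
Proof.
  unfold ugen. destruct (Nat.eqb_spec (S (b - a)) 0); [lia|].
  destruct (Nat.leb_spec (S (b - a)) (b - a)); [lia|auto].
Qed.

Lemma Cset_ugen P a b up z : (a < b)%nat ->
  Cset (ugen P a b) (S (b - a)) up z ->
  ray_south (glue_pos P a) z \/ segment (glue_pos P a) (tpos P (S a)) z \/
  (exists e, (S a <= e < b)%nat /\ edge P e z) \/ segment (tpos P b) (glue_pos P b) z \/
  (if up then ray_north (glue_pos P b) z else ray_south (glue_pos P b) z).
Proof.
  intros Hab [H|[[m [Hm Hs]]|H]].
  - left; auto.
  - destruct (Nat.eq_dec m 0) as [->|Hm0].
    + right; left. rewrite ugen_0, ugen_mid in Hs by lia.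
      replace (a + 1)%nat with (S a) in Hs by lia. auto.
    + destruct (Nat.eq_dec m (b - a)) as [->|Hm1].
      * right; right; right; left. rewrite ugen_last, ugen_mid in Hs by lia.
        replace (a + (b - a))%nat with b in Hs by lia. auto.
      * right; right; left. exists (a + m)%nat. split; [lia|].
        rewrite !ugen_mid in Hs by lia. unfold edge.
        replace (S (a + m)) with (a + S m)%nat by lia. auto.
  - right; right; right; right. rewrite ugen_last in H. auto.
Qed.

Lemma rect_ugen P a b : is_path P -> (S b < length P)%nat -> (a < b)%nat ->
  snd (ppos P (S a)) = snd (ppos P a) -> snd (ppos P (S b)) = snd (ppos P b) ->
  rect (ugen P a b) (S (b - a)).
Proof.
  intros HP Hb Hab Ea Eb m Hm.
  destruct (Nat.eq_dec m 0) as [->|Hm0].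
  - rewrite ugen_0, ugen_mid by lia. right. rewrite glue_mid, tpos_pos.
    unfold mid, toR; simpl. replace (a + 1)%nat with (S a) by lia. rewrite Ea. field.
  - destruct (Nat.eq_dec m (b - a)) as [->|Hm1].
    + rewrite ugen_last, ugen_mid by lia. right. rewrite glue_mid, tpos_pos.
      unfold mid, toR; simpl. replace (a + (b - a))%nat with b by lia. rewrite Eb. field.
    + rewrite !ugen_mid by lia. rewrite !tpos_pos.
      assert (U := step_unit P (a + m) HP ltac:(lia)).
      replace (S (a + m)) with (a + S m)%nat in U by lia.
      unfold unitZ, toR in *; simpl.
      destruct U as [[_ ->]|[[_ ->]|[[-> _]|[-> _]]]]; auto.
Qed.

Lemma vertex_in_Cset u n up m : (m <= n)%nat -> Cset u n up (u m).
Proof.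
  intros H. destruct m as [|m].
  - left. exists 0. split; [lra|]. destruct (u 0%nat); simpl; f_equal; ring.
  - right; left. exists m. split; [lia|]. exists 1. split; [lra|].
    destruct (u m), (u (S m)); simpl; f_equal; ring.
Qed.

Definition Hyp (sigma P : list tile) (i j k : nat) : Prop :=
  is_path P /\ (i < j)%nat /\ (j <= k)%nat /\ (S k < length P)%nat /\
  visible_south sigma P i /\ visible_south sigma P j /\
  points_east P i /\ points_east P j /\ visible_north sigma P k.

Lemma vis_s_hit sigma P a z : visible_south sigma P a -> ray_south (glue_pos P a) z ->
  emb P z -> z = glue_pos P a.
Proof.
  intros [_ V] [s [Hs ->]] He. destruct (Req_dec s 0) as [->|Hs0].
  - destruct (glue_pos P a); simpl; f_equal; ring.
  - exfalso. apply (proj1 (V s ltac:(lra))). auto.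
Qed.

Lemma vis_n_hit sigma P a z : visible_north sigma P a -> ray_north (glue_pos P a) z ->
  emb P z -> z = glue_pos P a.
Proof.
  intros [_ V] [s [Hs ->]] He. destruct (Req_dec s 0) as [->|Hs0].
  - destruct (glue_pos P a); simpl; f_equal; ring.
  - exfalso. apply (proj1 (V s ltac:(lra))). auto.
Qed.

Lemma tpos_xy P m : tpos P m = (IZR (fst (ppos P m)), IZR (snd (ppos P m))).
Proof. reflexivity. Qed.

Lemma lemA sigma P i j k : Hyp sigma P i j k -> fst (ppos P i) <> fst (ppos P j).
Proof.
  intros [HP [Hij [Hjk [Hk [Vi [Vj [Ei [Ej Vk]]]]]]]] E.
  assert (Gi := glue_east P i Ei). assert (Gj := glue_east P j Ej).
  assert (Ii := glue_in_emb P i ltac:(lia)). assert (Ij := glue_in_emb P j ltac:(lia)).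
  destruct (Z.lt_trichotomy (snd (ppos P i)) (snd (ppos P j))) as [L|[L|L]].
  - apply IZR_lt in L. apply (proj1 (proj2 Vj (IZR (snd (ppos P j)) - IZR (snd (ppos P i))) ltac:(lra))).
    rewrite Gj; simpl. replace (IZR (snd (ppos P j)) - (IZR (snd (ppos P j)) - IZR (snd (ppos P i))))
      with (IZR (snd (ppos P i))) by ring. rewrite <- E, <- Gi. auto.
  - assert (i = j) by (apply (pdist P); auto; try lia; destruct (ppos P i), (ppos P j); simpl in *; subst; auto).
    lia.
  - apply IZR_lt in L. apply (proj1 (proj2 Vi (IZR (snd (ppos P i)) - IZR (snd (ppos P j))) ltac:(lra))).
    rewrite Gi; simpl. replace (IZR (snd (ppos P i)) - (IZR (snd (ppos P i)) - IZR (snd (ppos P j))))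
      with (IZR (snd (ppos P j))) by ring. rewrite E, <- Gj. auto.
Qed.

Lemma seg_tj_gj P j z : points_east P j -> segment (tpos P j) (glue_pos P j) z ->
  fst z <= IZR (fst (ppos P j)) + /2.
Proof.
  intros Ej [t [Ht ->]]. rewrite (glue_east P j Ej), tpos_xy. simpl. nra.
Qed.

Lemma seg_tj_gj_edge P j z : segment (tpos P j) (glue_pos P j) z -> edge P j z.
Proof. intros H. apply subseg_l. exact H. Qed.

Lemma seg_gi_edge P i z : segment (glue_pos P i) (tpos P (S i)) z -> edge P i z.
Proof. intros H. apply subseg_r. exact H. Qed.

Lemma D_cases sigma P i j k z : Hyp sigma P i j k ->
  Cset (ugen P i j) (S (j - i)) false z ->
  ray_south (glue_pos P i) z \/ ray_south (glue_pos P j) z \/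
  (exists e, (i <= e < j)%nat /\ edge P e z) \/
  (edge P j z /\ fst z <= IZR (fst (ppos P j)) + /2).
Proof.
  intros [HP [Hij [Hjk [Hk [Vi [Vj [Ei [Ej Vk]]]]]]]] Hc.
  destruct (Cset_ugen P i j false z Hij Hc) as [H|[H|[H|[H|H]]]].
  - left; auto.
  - right; right; left. exists i. split; [lia|]. apply seg_gi_edge; auto.
  - right; right; left. destruct H as [e [He H]]. exists e. split; [lia|auto].
  - right; right; right. split; [apply seg_tj_gj_edge; auto|apply seg_tj_gj; auto].
  - right; left; auto.
Qed.

Lemma not_quarter (a b : Z) : IZR a + 3/4 <> IZR b + /2.
Proof.
  intros E. assert (A : (0 < b - a < 1)%Z) by (split; apply lt_IZR; rewrite minus_IZR; lra). lia.
Qed.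

Lemma VL sigma P i j k z : Hyp sigma P i j k ->
  fst z = IZR (fst (ppos P j)) + 3/4 -> (snd z <= IZR (snd (ppos P j)) \/ k = j) ->
  ~ Cset (ugen P i j) (S (j - i)) false z.
Proof.
  intros H Hx Hy Hc. assert (H' := H).
  destruct H as [HP [Hij [Hjk [Hk [Vi [Vj [Ei [Ej Vk]]]]]]]].
  assert (Gi := glue_east P i Ei). assert (Gj := glue_east P j Ej).
  destruct (D_cases sigma P i j k z H' Hc) as [C|[C|[C|C]]].
  - destruct C as [s [Hs Ez]]. rewrite Gi in Ez. rewrite Ez in Hx. simpl in Hx.
    apply (not_quarter (fst (ppos P j)) (fst (ppos P i))). lra.
  - destruct C as [s [Hs Ez]]. rewrite Gj in Ez. rewrite Ez in Hx. simpl in Hx. lra.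
  - destruct C as [e [He Ee]].
    assert (G := nonint P e z (fst (ppos P j)) HP ltac:(lia) Ee ltac:(lra)).
    assert (Ie := glue_in_emb P e ltac:(lia)).
    destruct (Rtotal_order (snd z) (IZR (snd (ppos P j)))) as [L|[L|L]].
    + apply (proj1 (proj2 Vj (IZR (snd (ppos P j)) - snd z) ltac:(lra))).
      rewrite Gj; simpl. replace (IZR (snd (ppos P j)) - (IZR (snd (ppos P j)) - snd z)) with (snd z) by ring.
      rewrite <- G. auto.
    + assert (e = j); [|lia]. apply (glue_inj P); auto; try lia. rewrite G, Gj, L. auto.
    + destruct Hy as [Hy|Hy]; [lra|]. subst k.
      apply (proj1 (proj2 Vk (snd z - IZR (snd (ppos P j))) ltac:(lra))).
      rewrite Gj; simpl. replace (IZR (snd (ppos P j)) + (snd z - IZR (snd (ppos P j)))) with (snd z) by ring.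
      rewrite <- G. auto.
  - lra.
Qed.

Lemma AvJ sigma P i j k z : Hyp sigma P i j k ->
  edge P j z -> fst z > IZR (fst (ppos P j)) + /2 ->
  ~ Cset (ugen P i j) (S (j - i)) false z.
Proof.
  intros H Ez Hx Hc. assert (H' := H).
  destruct H as [HP [Hij [Hjk [Hk [Vi [Vj [Ei [Ej Vk]]]]]]]].
  assert (Gi := glue_east P i Ei). assert (Gj := glue_east P j Ej).
  destruct (D_cases sigma P i j k z H' Hc) as [C|[C|[C|C]]].
  - assert (Z := vis_s_hit sigma P i z Vi C (edge_in_emb P j z ltac:(lia) Ez)).
    subst z. destruct (L4 P i j (glue_pos P i) HP ltac:(lia) ltac:(lia) Hij (glue_in_edge P i) Ez)
      as [_ Z]. rewrite tpos_pos in Z. apply (glue_not_lattice P i _ HP ltac:(lia) Z).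
  - destruct C as [s [Hs Ez']]. rewrite Gj in Ez'. rewrite Ez' in Hx. simpl in Hx. lra.
  - destruct C as [e [He Ee]].
    destruct (L4 P e j z HP ltac:(lia) ltac:(lia) ltac:(lia) Ee Ez) as [_ Z].
    rewrite Z, tpos_xy in Hx. simpl in Hx. lra.
  - lra.
Qed.

Lemma AvE sigma P i j k e z : Hyp sigma P i j k -> (j < e)%nat -> (S e < length P)%nat ->
  edge P e z -> ~ Cset (ugen P i j) (S (j - i)) false z.
Proof.
  intros H He He' Ez Hc. assert (H' := H).
  destruct H as [HP [Hij [Hjk [Hk [Vi [Vj [Ei [Ej Vk]]]]]]]].
  destruct (D_cases sigma P i j k z H' Hc) as [C|[C|[C|C]]].
  - assert (Z := vis_s_hit sigma P i z Vi C (edge_in_emb P e z ltac:(lia) Ez)).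
    subst z. destruct (L4 P i e (glue_pos P i) HP ltac:(lia) ltac:(lia) ltac:(lia) (glue_in_edge P i) Ez)
      as [_ Z]. rewrite tpos_pos in Z. apply (glue_not_lattice P i _ HP ltac:(lia) Z).
  - assert (Z := vis_s_hit sigma P j z Vj C (edge_in_emb P e z ltac:(lia) Ez)).
    subst z. destruct (L4 P j e (glue_pos P j) HP ltac:(lia) ltac:(lia) ltac:(lia) (glue_in_edge P j) Ez)
      as [_ Z]. rewrite tpos_pos in Z. apply (glue_not_lattice P j _ HP ltac:(lia) Z).
  - destruct C as [e' [He1 Ee]].
    destruct (L4 P e' e z HP ltac:(lia) ltac:(lia) ltac:(lia) Ee Ez) as [Z _]. lia.
  - destruct C as [C1 C2].
    destruct (L4 P j e z HP ltac:(lia) ltac:(lia) ltac:(lia) C1 Ez) as [Z1 Z2].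
    subst e. rewrite Z2, tpos_xy, (pos_east P j Ej) in C2. simpl in C2.
    rewrite plus_IZR in C2. lra.
Qed.

Lemma AvN sigma P i j k z : Hyp sigma P i j k -> (j < k)%nat ->
  ray_north (glue_pos P k) z -> ~ Cset (ugen P i j) (S (j - i)) false z.
Proof.
  intros H Hjk' Hr Hc. assert (H' := H).
  destruct H as [HP [Hij [Hjk [Hk [Vi [Vj [Ei [Ej Vk]]]]]]]].
  destruct Hr as [s [Hs Ez]].
  destruct (Req_dec s 0) as [->|Hs0].
  - apply (AvE sigma P i j k k z H' Hjk' Hk); auto. rewrite Ez.
    replace (snd (glue_pos P k) + 0) with (snd (glue_pos P k)) by ring.
    replace (fst (glue_pos P k), snd (glue_pos P k)) with (glue_pos P k) by (destruct (glue_pos P k); auto).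
    apply glue_in_edge.
  - assert (NE := proj1 (proj2 Vk s ltac:(lra))). rewrite <- Ez in NE.
    destruct (D_cases sigma P i j k z H' Hc) as [C|[C|[C|C]]].
    + destruct C as [s' [Hs' Ez']].
      apply (proj1 (proj2 Vk (s + s') ltac:(lra))).
      replace (fst (glue_pos P k), snd (glue_pos P k) + (s + s')) with (glue_pos P i).
      * apply glue_in_emb; lia.
      * rewrite Ez in Ez'. injection Ez'; intros A B.
        apply injective_projections; simpl; lra.
    + destruct C as [s' [Hs' Ez']].
      apply (proj1 (proj2 Vk (s + s') ltac:(lra))).
      replace (fst (glue_pos P k), snd (glue_pos P k) + (s + s')) with (glue_pos P j).
      * apply glue_in_emb; lia.
      * rewrite Ez in Ez'. injection Ez'; intros A B.
        apply injective_projections; simpl; lra.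
    + destruct C as [e [He Ee]]. apply NE. apply (edge_in_emb P e); auto; lia.
    + destruct C as [C _]. apply NE. apply (edge_in_emb P j); auto; lia.
Qed.

Lemma east_y P m : points_east P m -> snd (ppos P (S m)) = snd (ppos P m).
Proof. intros E. rewrite (pos_east P m E). reflexivity. Qed.

Lemma lemB sigma P i j k : Hyp sigma P i j k -> (fst (ppos P i) < fst (ppos P j))%Z.
Proof.
  intros H. assert (H' := H).
  destruct H as [HP [Hij [Hjk [Hk [Vi [Vj [Ei [Ej Vk]]]]]]]].
  assert (A := lemA sigma P i j k H').
  destruct (Z_lt_le_dec (fst (ppos P i)) (fst (ppos P j))) as [|Hle]; auto. exfalso.
  assert (Hlt : (fst (ppos P j) + 1 <= fst (ppos P i))%Z) by lia.
  apply IZR_le in Hlt. rewrite plus_IZR in Hlt.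
  set (xj := IZR (fst (ppos P j))) in *. set (yj := IZR (snd (ppos P j))).
  set (u := ugen P i j). set (n := S (j - i)).
  assert (R : rect u n).
  { apply rect_ugen; auto; try lia; apply east_y; auto. }
  destruct (bound_y u n) as [Y0 HY0].
  assert (HYj : Rabs yj < Y0).
  { specialize (HY0 (j - i)%nat ltac:(unfold n; lia)). unfold u in HY0.
    rewrite ugen_mid in HY0 by lia. replace (i + (j - i))%nat with j in HY0 by lia. exact HY0. }
  apply Rabs_def2 in HYj.
  set (Y1 := Rmax Y0 (Rabs (snd (glue_pos P k)) + 1)).
  assert (Y0 <= Y1) by apply Rmax_l.
  assert (Rabs (snd (glue_pos P k)) + 1 <= Y1) by apply Rmax_r.
  assert (Hgk : snd (glue_pos P k) < Y1).
  { pose proof (Rle_abs (snd (glue_pos P k))). lra. }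
  assert (Top : forall x, Nfull u n false (x, Y1) = false).
  { intros x. rewrite Nfull_top; auto. intros m Hm. specialize (HY0 m Hm).
    pose proof (Rle_abs (snd (u m))). simpl. lra. }
  assert (NA : Nfull u n false (xj + 3/4, - Y0) = true).
  { rewrite Nfull_bot.
    2: { intros m Hm. specialize (HY0 m Hm). apply Rabs_def2 in HY0. simpl. lra. }
    unfold u, n. rewrite ugen_0, ugen_last, (glue_east P i Ei), (glue_east P j Ej).
    simpl. fold xj. unfold Rltb.
    destruct (Rlt_dec (xj + 3/4) (IZR (fst (ppos P i)) + /2)); [|lra].
    destruct (Rlt_dec (xj + 3/4) (xj + /2)); [lra|]. reflexivity. }
  assert (N1 : Nfull u n false (xj + 3/4, - Y0) = Nfull u n false (xj + 3/4, yj)).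
  { apply seg_const; auto. intros z [t [Ht ->]]. apply (VL sigma P i j k); auto; simpl.
    - unfold xj; ring.
    - left. unfold yj in *. nra. }
  destruct (Nat.eq_dec k j) as [Ekj|Ekj].
  - assert (N2 : Nfull u n false (xj + 3/4, yj) = Nfull u n false (xj + 3/4, Y1)).
    { apply seg_const; auto. intros z [t [Ht ->]]. apply (VL sigma P i j k); auto; simpl.
      unfold xj; ring. }
    rewrite Top in N2. congruence.
  - assert (Hjk' : (j < k)%nat) by lia.
    assert (N2 : Nfull u n false (xj + 3/4, yj) = Nfull u n false (tpos P (S j))).
    { apply seg_const; auto. intros z [t [Ht ->]]. apply (AvJ sigma P i j k); auto.
      - unfold edge. rewrite !tpos_xy, (pos_east P j Ej). simpl. rewrite plus_IZR.
        exists ((3 + t) / 4). split; [lra|]. fold xj yj.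
        apply injective_projections; simpl; field.
      - rewrite tpos_xy, (pos_east P j Ej). simpl. rewrite plus_IZR. fold xj. nra. }
    assert (N3 : forall d, (S j + d <= k)%nat ->
              Nfull u n false (tpos P (S j)) = Nfull u n false (tpos P (S j + d))).
    { induction d as [|d IH]; intros Hd.
      - rewrite Nat.add_0_r. reflexivity.
      - rewrite IH by lia. apply seg_const; auto. intros z Hz.
        apply (AvE sigma P i j k (S j + d) z); auto; try lia.
        unfold edge. replace (S (S j + d)) with (S j + S d)%nat by lia. auto. }
    specialize (N3 (k - S j)%nat ltac:(lia)). replace (S j + (k - S j))%nat with k in N3 by lia.
    assert (N4 : Nfull u n false (tpos P k) = Nfull u n false (glue_pos P k)).
    { apply seg_const; auto. intros z Hz. apply (AvE sigma P i j k k z); auto.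
      apply seg_tj_gj_edge; auto. }
    assert (N5 : Nfull u n false (glue_pos P k) =
                 Nfull u n false (fst (glue_pos P k), Y1)).
    { apply seg_const; auto. intros z Hz. apply (AvN sigma P i j k z); auto.
      destruct Hz as [t [Ht ->]]. simpl.
      exists (t * (Y1 - snd (glue_pos P k))). split; [nra|]. apply injective_projections; simpl; ring. }
    rewrite Top in N5. congruence.
Qed.

Lemma vec_xy P i j : vecJI P i j =
  (IZR (fst (ppos P i)) - IZR (fst (ppos P j)), IZR (snd (ppos P i)) - IZR (snd (ppos P j))).
Proof. reflexivity. Qed.

Lemma k_horiz sigma P k : visible_north sigma P k -> snd (ppos P (S k)) = snd (ppos P k).
Proof.
  intros [[E|E] _]; [rewrite (pos_east P k E)|rewrite (pos_west P k E)]; reflexivity.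
Qed.

Lemma shift_cut sigma P i j k : Hyp sigma P i j k ->
  (forall z, emb (subpath P i k) z -> lk_shift P i j k z -> z = lk_shift0 P i j k) ->
  forall z, lk_shift P i j k z -> cut P i k z -> z = lk_shift0 P i j k.
Proof.
  intros H H3 z L C. assert (H' := H).
  destruct H as [HP [Hij [Hjk [Hk [Vi [Vj [Ei [Ej Vk]]]]]]]].
  assert (A := lemA sigma P i j k H').
  assert (Gi := glue_east P i Ei). assert (Gj := glue_east P j Ej).
  assert (L' := L). unfold lk_shift, translate, ray_north in L'.
  destruct L' as [s [Hs Ez]]. rewrite vec_xy in Ez. cbn [fst snd] in Ez.
  assert (Ex := f_equal fst Ez); assert (Ey := f_equal snd Ez); cbn [fst snd] in Ex, Ey.
  destruct C as [C|[C|[C|[C|C]]]].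
  - destruct C as [s' [Hs' Ez']]. rewrite Gi in Ez'. rewrite Ez' in Ex, Ey. cbn [fst snd] in Ex, Ey.
    destruct (Req_dec (s + s') 0) as [E0|E0].
    + unfold lk_shift0. rewrite vec_xy, Ez'. apply injective_projections; cbn [fst snd]; lra.
    + exfalso. apply (proj1 (proj2 Vk (s + s') ltac:(lra))).
      replace (fst (glue_pos P k), snd (glue_pos P k) + (s + s')) with (glue_pos P j).
      * apply glue_in_emb; lia.
      * rewrite Gj. apply injective_projections; cbn [fst snd]; lra.
  - apply H3; auto. apply (emb_subpath_edge P i k i); auto; try lia. apply seg_gi_edge; auto.
  - apply H3; auto. destruct (emb_subpath_inv P (S i) k z ltac:(lia) ltac:(lia) C)
      as [[e [He Ee]]|[m [Hm ->]]].
    + apply (emb_subpath_edge P i k e); auto; lia.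
    + apply emb_subpath_vertex; lia.
  - exfalso. destruct C as [t [Ht Ez']]. rewrite Ez', tpos_xy in Ex.
    idtac.
    destruct Vk as [[Ek|Ek] _]; [rewrite (glue_east P k Ek) in Ex|rewrite (glue_west P k Ek) in Ex];
      cbn [fst snd] in Ex.
    + apply A. assert (F : IZR (fst (ppos P i) - fst (ppos P j)) = (t - 1) / 2)
        by (rewrite minus_IZR; lra).
      assert (fst (ppos P i) - fst (ppos P j) = 0)%Z by (apply (Zopen _ _ F); lra). lia.
    + apply A. assert (F : IZR (fst (ppos P i) - fst (ppos P j)) = (1 - t) / 2)
        by (rewrite minus_IZR; lra).
      assert (fst (ppos P i) - fst (ppos P j) = 0)%Z by (apply (Zopen _ _ F); lra). lia.
  - exfalso. destruct C as [s' [_ Ez']]. rewrite Ez' in Ex. cbn [fst snd] in Ex.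
    apply A. assert (F : IZR (fst (ppos P i) - fst (ppos P j)) = 0) by (rewrite minus_IZR; lra).
    apply eq_IZR in F. lia.
Qed.

Lemma Cset_cut sigma P i j k z : Hyp sigma P i j k ->
  Cset (ugen P i k) (S (k - i)) true z -> cut P i k z.
Proof.
  intros [HP [Hij [Hjk [Hk _]]]] C.
  destruct (Cset_ugen P i k true z ltac:(lia) C) as [H|[H|[H|[H|H]]]]; unfold cut.
  - left; auto.
  - right; left; auto.
  - right; right; left. destruct H as [e [He Ee]]. apply (emb_subpath_edge P (S i) k e); auto; lia.
  - right; right; right; left; auto.
  - right; right; right; right; auto.
Qed.

Theorem mainTheorem5 (T : list tiletype) (sigma : list tile) (P : list tile)
  (i j k : nat) :
  valid_seed sigma ->
  producible_path T sigma P ->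
  shield sigma P i j k ->
  (forall z, (lk_shift P i j k z /\ workspace (cut P i k) z) <->
             (lk_shift P i j k z /\ cut P i k z)) /\
  (forall z, lk_shift P i j k z /\ cut P i k z -> z = lk_shift0 P i j k).
Proof.
  intros _ [_ [HP _]] [Hij [Hjk [Hk [_ [Vi [Vj [Ei [Ej [Vk H3]]]]]]]]].
  assert (H : Hyp sigma P i j k) by (unfold Hyp; tauto).
  assert (SC := shift_cut sigma P i j k H H3).
  split.
  - intros z; split.
    + intros [L W]. split; auto.
      destruct W as [C|[X0 [HX [f [Hf [f0 [f1 Hfa]]]]]]]; auto.
      exfalso.
      assert (Cz : ~ cut P i k z) by (rewrite <- f1; apply Hfa; lra).
      set (u := ugen P i k). set (n := S (k - i)).
      assert (R : rect u n).
      { apply rect_ugen; auto; try lia; [apply east_y; auto|apply (k_horiz sigma); auto]. }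
      assert (N1 := curve_const u n true f R Hf
                    (fun t Ht C => Hfa t Ht (Cset_cut sigma P i j k (f t) H C))).
      rewrite f0, f1 in N1.
      rewrite (Nfull_right u n true (X0, 0)) in N1.
      2: { intros m Hm. apply Rlt_le, HX, (Cset_cut sigma P i j k); auto.
           apply vertex_in_Cset; auto. }
      destruct (bound_y u n) as [Y0 HY0].
      set (Y1 := Rmax Y0 (snd z + 1)).
      assert (Y0 <= Y1) by apply Rmax_l.
      assert (snd z + 1 <= Y1) by apply Rmax_r.
      assert (L' := L). unfold lk_shift, translate, ray_north in L'.
      destruct L' as [s [Hs Ez]]. assert (Ex := f_equal fst Ez); assert (Ey := f_equal snd Ez); cbn [fst snd] in Ex, Ey.
      assert (N2 : Nfull u n true z = Nfull u n true (fst z, Y1)).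
      { replace z with (fst z, snd z) at 1 by (destruct z; auto).
        apply seg_const; auto. intros w [t [Ht ->]] Cw. simpl in Cw.
        apply (Cset_cut sigma P i j k) in Cw; auto.
        assert (Lw : lk_shift P i j k (fst z + t * (fst z - fst z), snd z + t * (Y1 - snd z))).
        { unfold lk_shift, translate, ray_north. exists (s + t * (Y1 - snd z)).
          split; [nra|]. apply injective_projections; cbn [fst snd]; nra. }
        assert (E := SC _ Lw Cw). unfold lk_shift0 in E. assert (E2 := f_equal snd E); cbn [fst snd] in E2.
        assert (t * (Y1 - snd z) = 0) by nra.
        apply Cz. replace z with (fst z + t * (fst z - fst z), snd z + t * (Y1 - snd z)); auto.
        apply injective_projections; cbn [fst snd]; nra. }
      rewrite (Nfull_top u n true (fst z, Y1)) in N2.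
      2: { intros m Hm. specialize (HY0 m Hm). pose proof (Rle_abs (snd (u m))). cbn [fst snd]. lra. }
      assert (B := lemB sigma P i j k H). apply IZR_lt in B.
      rewrite vec_xy in Ex. cbn [fst snd] in Ex.
      unfold u, n in N2. rewrite ugen_last in N2. unfold Rltb in N2. cbn [fst snd] in N2.
      destruct (Rlt_dec (fst z) (fst (glue_pos P k))); [|lra].
      unfold u, n in *. congruence.
    + intros [L C]. split; auto. left; auto.
  - intros z [L C]. apply SC; auto.
Qed.
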